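(* Let $B$ be a non-abelian group, $H$ a finitely generated infinite group with fixed finite generating set $X=\{x_1,\dots,x_n\}$, $W=B\wr H$, and fix $a,b\in B$ with $ab\ne ba$. For $S\subseteq H$ define $\bar a,\bar b_S\in B^H$ by $\bar a(1)=a$, $\bar a(x)=1$ for $x\neq1$, and $\bar b_S(x)=b$ for $x\in S$, $\bar b_S(x)=1$ for $x\notin S$; let $G_S\le W$ be generated by $H,\bar a,\bar b_S$ and $Y_S=(x_1,\dots,x_n,\bar a,\bar b_S)$. Let $\xi:2^H\to\mathcal G$, $\xi(S)=(G_S,Y_S)$. Then the restriction of $\xi$ to the subspace $D_R(H)$ of $2^H$ is continuous.
   Context: $B^H$ is the group of all functions $H\to B$ with pointwise multiplication; $B\wr H=B^H\rtimes H$ with $(hfh^{-1})(x)=f(h^{-1}x)$. $2^H$ is the space of all subsets of $H$ with the product topology; $D_R(H)$ is the set of $S\subseteq H$ whose orbit $\{Sh:h\in H\}$ under right multiplication is dense in $2^H$. Space of marked groups: for $m\in\mathbb N$, $\mathcal G_m$ is the set of pairs $(G,A)$, $G$ a group and $A=(a_1,\dots,a_m)$ an ordered generating tuple, modulo $(G,(a_i))\approx(G',(a'_i))$ iff $a_i\mapsto a'_i$ extends to an isomorphism. $(G,A)\approx_r(G',A')$ means there is a labeled directed graph isomorphism between the radius-$r$ balls about the identity in the Cayley graphs, sending $a_i$-edges to $a'_i$-edges. The topology on $\mathcal G_m$ has basis $\{(G',A')\in\mathcal G_m:(G',A')\approx_r(G,A)\}$, $r\in\mathbb N$; $\mathcal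 G_m\subseteq\mathcal G_{m+1}$ via $(G,(a_1,\dots,a_m))\mapsto(G,(a_1,\dots,a_m,1))$, and $\mathcal G=\bigcup_m\mathcal G_m$ carries the union topology. *)

(* Defs.v *)
From HB Require Import structures.
From mathcomp Require Import all_boot.
Set Implicit Arguments.
Unset Strict Implicit.
Unset Printing Implicit Defensive.
Local Open Scope group_scope.

Definition evalw {T : Type} (mul : T -> T -> T) (one : T) (inv : T -> T)
  (Y : seq T) (w : seq (nat * bool)) : T :=
  foldr (fun p acc => mul (if p.2 then nth one Y p.1 else inv (nth one Y p.1)) acc)
        one w.

Definition valid_word {T : Type} (Y : seq T) (w : seq (nat * bool)) : bool :=
  all (fun p => p.1 < size Y)%N w.

Definition generates (G : groupType) (Y : seq G) : Prop :=
  forall g : G, exists w, valid_word Y w /\ g = evalw (@mul G) 1 (@inv G) Y w.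

Section Wreath.
Variables (B H : groupType).

(* B wr H = B^H x| H, with (h f h^-1)(x) = f(h^-1 x) *)
Definition W : Type := ((H -> B) * H)%type.
Definition act (h : H) (f : H -> B) : H -> B := fun x => f (h^-1 * x).
Definition Wmul (u v : W) : W :=
  (fun x => u.1 x * act u.2 v.1 x, u.2 * v.2).
Definition Wone : W := (fun _ => 1, 1).
Definition Winv (u : W) : W := (act (u.2)^-1 (fun x => (u.1 x)^-1), (u.2)^-1).
Definition Hin (h : H) : W := (fun _ => 1, h).
Definition Bfun (f : H -> B) : W := (f, 1).

Definition Weval (Y : seq W) (w : seq (nat * bool)) : W := evalw Wmul Wone Winv Y w.

Definition ball (Y : seq W) (r : nat) (g : W) : Prop :=
  exists w, (size w <= r)%N /\ valid_word Y w /\ g = Weval Y w.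

Definition gen (Y : seq W) (g : W) : Prop :=
  exists w, valid_word Y w /\ g = Weval Y w.

(* (<Y>, Y) ~_r (<Y'>, Y'): the marked groups lie in the same G_m (same
   number of generators) and there is an isomorphism of labelled directed
   graphs between the radius-r balls about the identity of their Cayley
   graphs (edge g -i-> g*Y_i), sending identity to identity and
   i-edges to i-edges. *)
Definition ball_equiv (Y Y' : seq W) (r : nat) : Prop :=
  size Y = size Y' /\
  exists phi : W -> W,
    phi Wone = Wone /\
    (forall g, ball Y r g -> ball Y' r (phi g)) /\
    (forall g g', ball Y r g -> ball Y r g' -> phi g = phi g' -> g = g') /\
    (forall g', ball Y' r g' -> exists g, ball Y r g /\ phi g = g') /\
    (forall u v i, ball Y r u -> ball Y r v -> (i < size Y)%N ->
       (v = Wmul u (nth Wone Y i) <-> phi v = Wmul (phi u) (nth Wone Y' i))).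

(* subsets of H are elements of 2^H = H -> bool *)
Definition abar (a : B) : H -> B := fun x => if x == 1 then a else 1.
Definition bbar (b : B) (S : H -> bool) : H -> B := fun x => if S x then b else 1.

(* Y_S = (x_1, ..., x_n, abar, bbar_S);  xi(S) = (G_S, Y_S) with G_S = gen Y_S *)
Definition YS (xs : seq H) (a b : B) (S : H -> bool) : seq W :=
  map Hin xs ++ [:: Bfun (abar a); Bfun (bbar b S)].

Definition rtrans (S : H -> bool) (h : H) : H -> bool := fun y => S (y * h^-1).

(* D_R(H): the orbit {S h} is dense in 2^H (product topology): every basic
   open set, given by a finite F and a pattern T on F, meets the orbit. *)
Definition DR (S : H -> bool) : Prop :=
  forall (F : seq H) (T : H -> bool), exists h : H,
    forall y, y \in F -> rtrans S h y = T y.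

End Wreath.

(* Main.v *)
Require Import Defs.
From HB Require Import structures.
From mathcomp Require Import all_boot.
From Stdlib Require Import FunctionalExtensionality ClassicalEpsilon Classical.
Set Implicit Arguments.
Unset Strict Implicit.
Unset Printing Implicit Defensive.
Local Open Scope group_scope.

Section Proof.
Variables (B H : groupType) (xs : seq H) (a b : B).

Notation WW := (W B H).
Notation W1 := (Wone B H).

Definition letter (Y : seq WW) (p : nat * bool) : WW :=
  if p.2 then nth W1 Y p.1 else Winv (nth W1 Y p.1).

Lemma Weval_cons Y p w : Weval Y (p :: w) = Wmul (letter Y p) (Weval Y w).
Proof. by []. Qed.

Lemma Wext (u v : WW) : (forall x, u.1 x = v.1 x) -> u.2 = v.2 -> u = v.
Proof.
case: u => u1 u2; case: v => v1 v2 /= e1 e2.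
by rewrite e2 (functional_extensionality _ _ e1).
Qed.

Lemma Wmul_assoc (u v z : WW) : Wmul u (Wmul v z) = Wmul (Wmul u v) z.
Proof.
apply: Wext => [x|]; rewrite /Wmul /act /=; last by rewrite mulgA.
by rewrite mulgA invgM mulgA.
Qed.

Lemma Wmul1 (u : WW) : Wmul u W1 = u.
Proof. by apply: Wext => [x|]; rewrite /Wmul /act /= mulg1. Qed.

Lemma W1mul (u : WW) : Wmul W1 u = u.
Proof. apply: Wext => [x|]; rewrite /Wmul /act /= ?mul1g //; by rewrite (@invg1 H) mul1g. Qed.

Lemma Weval_rcons Y w p : Weval Y (rcons w p) = Wmul (Weval Y w) (letter Y p).
Proof.
elim: w => [|q w IH] /=.
  by rewrite /Weval /= -/(letter Y p) Wmul1 W1mul.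
by rewrite -!/(Weval _ _) IH Wmul_assoc.
Qed.

Lemma size_YS S : size (YS xs a b S) = (size xs).+2.
Proof. by rewrite /YS size_cat size_map addn2. Qed.

Lemma valid_YS S S' w : valid_word (YS xs a b S) w = valid_word (YS xs a b S') w.
Proof. by rewrite /valid_word !size_YS. Qed.

Lemma nthYS i :
  (exists h, forall S, nth W1 (YS xs a b S) i = Hin B h) \/
  (forall S, nth W1 (YS xs a b S) i = Bfun (abar a)) \/
  (forall S, nth W1 (YS xs a b S) i = Bfun (bbar b S)).
Proof.
rewrite /YS.
case: (ltnP i (size xs)) => hi.
  left; exists (nth 1 xs i) => S.
  by rewrite nth_cat size_map hi (nth_map 1).
have E : forall S, nth W1 (map (@Hin B H) xs ++ [:: Bfun (abar a); Bfun (bbar b S)]) i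
   = nth W1 [:: Bfun (abar a); Bfun (bbar b S)] (i - size xs).
  by move=> S; rewrite nth_cat size_map ltnNge hi.
case: (i - size xs) E => [|[|k]] E.
- by right; left => S; rewrite E.
- by right; right => S; rewrite E.
- left; exists 1 => S; rewrite E /=.
  by rewrite nth_nil.
Qed.

Lemma letter_props (S S' : H -> bool) p :
  (letter (YS xs a b S) p).2 = (letter (YS xs a b S') p).2 /\
  forall x x', S x = S' x' -> (x == 1) = (x' == 1) ->
    (letter (YS xs a b S) p).1 x = (letter (YS xs a b S') p).1 x'.
Proof.
rewrite /letter; case: p => i [] /=;
case: (nthYS i) => [[h Eh]|[Eh|Eh]]; rewrite !Eh; split => // x x' e1 e2;
rewrite /Winv /act /abar /bbar /= ?invgK ?invg1 ?mul1g ?e1 ?e2 //.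
Qed.


Notation S0 := (fun _ : H => false).

Lemma ev2 S S' w : (Weval (YS xs a b S) w).2 = (Weval (YS xs a b S') w).2.
Proof.
elim: w => [|p w IH] //; rewrite !Weval_cons /Wmul /= IH.
by case: (letter_props S S' p) => ->.
Qed.

Definition Lets : seq (nat * bool) :=
  [seq (i, c) | i <- iota 0 (size xs).+2, c <- [:: true; false]].
Definition Kinv : seq H := [seq ((letter (YS xs a b S0) p).2)^-1 | p <- Lets].
Fixpoint Bl (L : nat) : seq H :=
  if L is L'.+1 then 1 :: [seq q * k | q <- Bl L', k <- Kinv] else [:: 1].

Lemma Bl1 L : 1 \in Bl L.
Proof. by case: L => [|L] /=; rewrite inE eqxx. Qed.

Lemma Kinv_mem p : p.1 < (size xs).+2 -> ((letter (YS xs a b S0) p).2)^-1 \in Kinv.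
Proof.
move=> vp; apply/mapP; exists p => //; rewrite /Lets.
apply/allpairsPdep; exists p.1, p.2; split.
- by rewrite mem_iota.
- by case: p vp => ? [] _; rewrite !inE.
- by case: p vp.
Qed.

Lemma Bl_step L q k : q \in Bl L -> k \in Kinv -> q * k \in Bl L.+1.
Proof.
move=> hq hk; rewrite (_ : Bl L.+1 = 1 :: [seq q * k | q <- Bl L, k <- Kinv]) // inE; apply/orP; right.
by apply/allpairsPdep; exists q, k.
Qed.

Lemma loc L w : valid_word (YS xs a b S0) w -> size w <= L ->
  forall S S' x x', (forall q, q \in Bl L -> S (q * x) = S' (q * x') /\
                                      ((q * x) == 1) = ((q * x') == 1)) ->
  (Weval (YS xs a b S) w).1 x = (Weval (YS xs a b S') w).1 x'.
Proof.
elim: w L => [|p w IH] L; first by [].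
rewrite {1}/valid_word [all _ _]/= => /andP[vp vw].
case: L => [|L] // sz S S' x x' hq.
rewrite !Weval_cons /Wmul /act [(_, _).1]/=.
case: (letter_props S S' p) => e2 e1.
case: (hq 1 (Bl1 _)).
rewrite !mul1g => hS h1.
rewrite (e1 x x' hS h1); congr (_ * _).
case: (letter_props S S0 p) => e2' _.
rewrite -e2 e2'.
apply: (IH L vw sz) => q hqL.
rewrite size_YS in vp.
have := hq _ (Bl_step hqL (Kinv_mem vp)).
by rewrite -!mulgA.
Qed.


Lemma far (Hinf : forall s : seq H, exists h : H, h \notin s) S (HS : DR S) (K : seq H) :
  forall (F0 : seq H) (sg : H -> bool), exists h, h \notin K /\
    forall y, y \in F0 -> S (y * h^-1) = sg y.
Proof.
elim: K => [|k K IH] F0 sg.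
  by case: (HS F0 sg) => h Hh; exists h.
case: (Hinf F0) => q hq.
case: (IH (q :: F0) (fun y => if y == q then ~~ S (q * k^-1) else sg y)) => h [hK Hh].
exists h; split.
  rewrite inE negb_or hK andbT; apply/eqP => ehk.
  have := Hh q; rewrite inE eqxx ehk => /(_ isT).
  by case: (S (q * k^-1)).
move=> y hy; have := Hh y; rewrite inE hy orbT => /(_ isT) ->.
case: eqP => // eyq; by move: hq; rewrite -eyq hy.
Qed.

Definition Fset L := [seq q * p^-1 | q <- Bl L, p <- Bl L].

Lemma key_dir (Hinf : forall s : seq H, exists h : H, h \notin s) L S T (HT : DR T)
  (ag : forall y, y \in Fset L -> T y = S y) w1 w2 :
  valid_word (YS xs a b S0) w1 -> valid_word (YS xs a b S0) w2 ->
  size w1 <= L -> size w2 <= L ->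
  Weval (YS xs a b T) w1 = Weval (YS xs a b T) w2 ->
  Weval (YS xs a b S) w1 = Weval (YS xs a b S) w2.
Proof.
move=> v1 v2 s1 s2 e.
apply: Wext; last by rewrite (ev2 S T) (ev2 S T w2) e.
move=> x.
have e1 : (Weval (YS xs a b T) w1).1 = (Weval (YS xs a b T) w2).1 by rewrite e.
case: (classic (exists p, p \in Bl L /\ p * x = 1)) => [[p [hp px]]|nf].
  have hx : x = p^-1 by rewrite (mulg1_eq px).
  have hq : forall q, q \in Bl L -> S (q * x) = T (q * x) /\ ((q * x) == 1) = ((q * x) == 1).
    move=> q hqL; split => //; rewrite ag // hx.
    by apply/allpairsPdep; exists q, p.
  by rewrite (loc v1 s1 hq) (loc v2 s2 hq) e1.
case: (far Hinf HT (Bl L) (Bl L) (fun y => S (y * x))) => h [hK Hh].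
have hq : forall q, q \in Bl L -> S (q * x) = T (q * h^-1) /\ ((q * x) == 1) = ((q * h^-1) == 1).
  move=> q hqL; split; first by rewrite Hh.
  have -> : (q * x == 1) = false.
    by apply/eqP => qx; apply: nf; exists q.
  symmetry; apply/eqP => qh; move: hK; rewrite -(divg1_eq qh) hqL //.
by rewrite (loc v1 s1 hq) (loc v2 s2 hq) e1.
Qed.

End Proof.

Theorem corollary3p6 (B H : groupType) (xs : seq H) (a b : B)
  (hab : a * b != b * a)
  (Hinf : forall s : seq H, exists h : H, h \notin s)
  (Hgen : generates xs) :
  forall S : H -> bool, DR S ->
  forall r : nat, exists F : seq H,
    forall T : H -> bool, DR T ->
      (forall y, y \in F -> T y = S y) ->
      ball_equiv (YS xs a b T) (YS xs a b S) r.
Proof.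
move=> S HS r; exists (Fset xs a b r.+1) => T HT ag.
set S0 := (fun _ : H => false).
have KEY : forall w1 w2, valid_word (YS xs a b T) w1 -> valid_word (YS xs a b T) w2 ->
    size w1 <= r.+1 -> size w2 <= r.+1 ->
    (Weval (YS xs a b T) w1 = Weval (YS xs a b T) w2 <->
     Weval (YS xs a b S) w1 = Weval (YS xs a b S) w2).
  move=> w1 w2 v1 v2 s1 s2.
  rewrite (valid_YS xs a b T S0) in v1; rewrite (valid_YS xs a b T S0) in v2.
  split.
    exact: (key_dir Hinf HT ag v1 v2 s1 s2).
  have ag' : forall y, y \in Fset xs a b r.+1 -> S y = T y by move=> y /ag ->.
  exact: (key_dir Hinf HS ag' v1 v2 s1 s2).
set P := fun g w => (size w <= r)%N /\ valid_word (YS xs a b T) w /\ g = Weval (YS xs a b T) w.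
pose eps g := epsilon (inhabits [::]) (P g).
pose phi g := Weval (YS xs a b S) (eps g).
have spec : forall g, ball (YS xs a b T) r g -> P g (eps g).
  by move=> g hg; apply: epsilon_spec.
have vTS : forall w, valid_word (YS xs a b T) w = valid_word (YS xs a b S) w.
  by move=> w; rewrite (valid_YS xs a b T S).
split; first by rewrite !size_YS.
exists phi; split.
  have hb : ball (YS xs a b T) r (Wone B H) by exists [::].
  case: (spec _ hb) => s0 [v0 e0].
  rewrite /phi; symmetry.
  by apply/(KEY [::] _ _ v0) => //; apply: leqW.
split.
  move=> g hg; case: (spec _ hg) => s0 [v0 e0].
  by exists (eps g); rewrite -vTS.
split.
  move=> g g' hg hg'; case: (spec _ hg) => s0 [v0 e0]; case: (spec _ hg') => s0' [v0' e0'].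
  rewrite /phi => e; rewrite e0 e0'.
  by apply/(KEY _ _ v0 v0' (leqW s0) (leqW s0')).
split.
  move=> g' [w [sw [vw ->]]].
  have hb : ball (YS xs a b T) r (Weval (YS xs a b T) w) by exists w; rewrite vTS.
  exists (Weval (YS xs a b T) w); split => //.
  case: (spec _ hb) => s0 [v0 e0].
  rewrite /phi; apply/(KEY _ _ v0 _ (leqW s0) (leqW sw)); first by rewrite vTS.
  by rewrite -e0.
move=> u v i hu hv hi.
case: (spec _ hu) => su [vu eu]; case: (spec _ hv) => sv [vv ev].
have vr : valid_word (YS xs a b T) (rcons (eps u) (i, true)).
  by rewrite /valid_word all_rcons hi.
have hl : forall Y, Wmul (Weval Y (eps u)) (nth (Wone B H) Y i) = Weval Y (rcons (eps u) (i, true)).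
  by move=> Y; rewrite Weval_rcons.
rewrite /phi hl {1}eu hl {1}ev.
have sr : size (rcons (eps u) (i, true)) <= r.+1 by rewrite size_rcons.
exact: (KEY _ _ vv vr (leqW sv) sr).
Qed.
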